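(* Let $T$ be a complete theory and $\phi,\psi$ formulas with $T\vdash\phi\,\mathtt u\,\psi$. Then $T\vdash\psi$, or there exists $m\in\omega$ such that $T\vdash\bigwedge_{i=0}^m[1]^i(\phi\wedge\neg\psi)\wedge[1]^{m+1}\psi$.
   Context: Fix $Var=\{p_n : n\in\omega\}$. The formulas of $L([1],[\omega],\mathtt u,\mathtt U)$ form the smallest set containing $Var$ and closed under $\neg\phi$, $[1]\phi$, $[\omega]\phi$, $(\phi\wedge\psi)$, $(\phi\,\mathtt u\,\psi)$, $(\phi\,\mathtt U\,\psi)$. Abbreviations: $\vee,\to,\leftrightarrow$ as usual; $\mathtt f\phi:=(\phi\to\phi)\,\mathtt u\,\phi$, $\mathtt g\phi:=\neg\mathtt f\neg\phi$; $[a]^0\phi:=\phi$, $[a]^{n+1}\phi:=[a][a]^n\phi$ for $a\in\{1,\omega\}$. A theory is a nonempty set of formulas. Proof system. Axioms: all instances of A1 substitution instances of classical tautologies; A2 $[1][\omega]\phi\leftrightarrow[\omega]\phi$; A3 $\neg[a]\phi\leftrightarrow[a]\neg\phi$ ($a\in\{1,\omega\}$); A4 $[a](\phi*\psi)\leftrightarrow([a]\phi*[a]\psi)$ ($a\in\{1,\omega\}$, $*\in\{\wedge,\vee,\to,\leftrightarrow\}$); A5 $\psi\to\phi\,\mathtt u\,\psi$; A6 $\phi\,\mathtt u\,\psi\to\phi\,\mathtt U\,\psi$; A7 $\big(\bigwedge_{k=0}^n[1]^k(\phi\wedge\neg\psi)\wedge[1]^{n+1}\psi\big)\to\phi\,\mathtt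 u\,\psi$ ($n\in\omega$); A8 $\big(\bigwedge_{k=0}^n[\omega]^k\mathtt g(\phi\wedge\neg\psi)\wedge[\omega]^{n+1}(\phi\,\mathtt u\,\psi)\big)\to\phi\,\mathtt U\,\psi$ ($n\in\omega$). Rules: R1 from $\phi$ and $\phi\to\psi$ infer $\psi$; R2 from $\phi$ infer $[a]\phi$, $a\in\{1,\omega\}$; R3 from $\theta\to\neg\psi$ and all $\theta\to\big(\bigvee_{k=0}^n[1]^k(\neg\phi\vee\psi)\vee[1]^{n+1}\neg\psi\big)$, $n\in\omega$, infer $\theta\to\neg(\phi\,\mathtt u\,\psi)$; R4 from $\theta\to\neg(\phi\,\mathtt u\,\psi)$ and all $\theta\to\big(\bigvee_{k=0}^n[\omega]^k\neg\mathtt g(\phi\wedge\neg\psi)\vee[\omega]^{n+1}\neg(\phi\,\mathtt u\,\psi)\big)$, $n\in\omega$, infer $\theta\to\neg(\phi\,\mathtt U\,\psi)$. $\vdash\phi$ ($\phi$ is a theorem) iff there is a sequence $(\phi_\beta)_{\beta\le\alpha}$, $\alpha$ a countable ordinal, with $\phi_\alpha=\phi$ and each $\phi_\beta$ an axiom or obtained from earlier members by a rule. $T\vdash\phi$ iff there is such a sequence in which each member is an axiom, a member of $T$, or obtained from earlier members by a rule, where R2 may only be applied to theorems. A theory $T$ is consistent iff there is no formula $\chi$ with $T\vdash\chi$ and $T\vdash\neg\chi$; $T$ is complete iff it is consistent and for every formula $\chi$, $T\vdash\chi$ or $T\vdash\neg\chi$. *)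

(* Defs.v *)
From Stdlib Require Import Arith.

Inductive modality : Type := M1 | Mw.

Inductive formula : Type :=
| Var   : nat -> formula
| Neg   : formula -> formula
| Box   : modality -> formula -> formula
| And   : formula -> formula -> formula
| Un    : formula -> formula -> formula    (* phi u psi *)
| UU    : formula -> formula -> formula.   (* phi U psi *)

Definition Or  (a b : formula) : formula := Neg (And (Neg a) (Neg b)).
Definition Imp (a b : formula) : formula := Or (Neg a) b.
Definition Iff (a b : formula) : formula := And (Imp a b) (Imp b a).
Definition Ff (a : formula) : formula := Un (Imp a a) a.
Definition Gg (a : formula) : formula := Neg (Ff (Neg a)).

Fixpoint boxn (m : modality) (n : nat) (a : formula) : formula :=
  match n with 0 => a | S k => Box m (boxn m k a) end.

Fixpoint bigAnd (n : nat) (F : nat -> formula) : formula :=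
  match n with 0 => F 0 | S k => And (bigAnd k F) (F (S k)) end.
Fixpoint bigOr (n : nat) (F : nat -> formula) : formula :=
  match n with 0 => F 0 | S k => Or (bigOr k F) (F (S k)) end.

Fixpoint is_prop (p : formula) : Prop :=
  match p with
  | Var _ => True
  | Neg a => is_prop a
  | And a b => is_prop a /\ is_prop b
  | _ => False
  end.

Fixpoint peval (v : nat -> bool) (p : formula) : bool :=
  match p with
  | Var n => v n
  | Neg a => negb (peval v a)
  | And a b => andb (peval v a) (peval v b)
  | _ => false
  end.

Definition tautology (p : formula) : Prop :=
  is_prop p /\ forall v : nat -> bool, peval v p = true.

Fixpoint subst (s : nat -> formula) (p : formula) : formula :=
  match p with
  | Var n => s n
  | Neg a => Neg (subst s a)
  | Box m a => Box m (subst s a)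
  | And a b => And (subst s a) (subst s b)
  | Un a b => Un (subst s a) (subst s b)
  | UU a b => UU (subst s a) (subst s b)
  end.

Inductive binconn : (formula -> formula -> formula) -> Prop :=
| bc_and : binconn And | bc_or : binconn Or
| bc_imp : binconn Imp | bc_iff : binconn Iff.

Inductive IsAxiom : formula -> Prop :=
| A1 : forall p s, tautology p -> IsAxiom (subst s p)
| A2 : forall a, IsAxiom (Iff (Box M1 (Box Mw a)) (Box Mw a))
| A3 : forall m a, IsAxiom (Iff (Neg (Box m a)) (Box m (Neg a)))
| A4 : forall m op a b, binconn op ->
    IsAxiom (Iff (Box m (op a b)) (op (Box m a) (Box m b)))
| A5 : forall a b, IsAxiom (Imp b (Un a b))
| A6 : forall a b, IsAxiom (Imp (Un a b) (UU a b))
| A7 : forall a b n,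
    IsAxiom (Imp (And (bigAnd n (fun k => boxn M1 k (And a (Neg b))))
                    (boxn M1 (S n) b))
               (Un a b))
| A8 : forall a b n,
    IsAxiom (Imp (And (bigAnd n (fun k => boxn Mw k (Gg (And a (Neg b)))))
                    (boxn Mw (S n) (Un a b)))
               (UU a b)).

(* Theorems: the least set containing the axioms and closed under R1-R4.
   Derivations with countably-branching rules = well-founded trees,
   equivalently sequences of countable ordinal length. *)
Inductive Thm : formula -> Prop :=
| T_ax : forall a, IsAxiom a -> Thm a
| T_R1 : forall a b, Thm a -> Thm (Imp a b) -> Thm b
| T_R2 : forall m a, Thm a -> Thm (Box m a)
| T_R3 : forall th a b,
    Thm (Imp th (Neg b)) ->
    (forall n, Thm (Imp th (Or (bigOr n (fun k => boxn M1 k (Or (Neg a) b)))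
                               (boxn M1 (S n) (Neg b))))) ->
    Thm (Imp th (Neg (Un a b)))
| T_R4 : forall th a b,
    Thm (Imp th (Neg (Un a b))) ->
    (forall n, Thm (Imp th (Or (bigOr n (fun k => boxn Mw k (Neg (Gg (And a (Neg b))))))
                               (boxn Mw (S n) (Neg (Un a b)))))) ->
    Thm (Imp th (Neg (UU a b))).

Definition theory := formula -> Prop.

(* T |- phi : R2 only applicable to theorems *)
Inductive Der (T : theory) : formula -> Prop :=
| D_ax : forall a, IsAxiom a -> Der T a
| D_hyp : forall a, T a -> Der T a
| D_R1 : forall a b, Der T a -> Der T (Imp a b) -> Der T b
| D_R2 : forall m a, Thm a -> Der T (Box m a)
| D_R3 : forall th a b,
    Der T (Imp th (Neg b)) ->
    (forall n, Der T (Imp th (Or (bigOr n (fun k => boxn M1 k (Or (Neg a) b)))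
                                 (boxn M1 (S n) (Neg b))))) ->
    Der T (Imp th (Neg (Un a b)))
| D_R4 : forall th a b,
    Der T (Imp th (Neg (Un a b))) ->
    (forall n, Der T (Imp th (Or (bigOr n (fun k => boxn Mw k (Neg (Gg (And a (Neg b))))))
                                 (boxn Mw (S n) (Neg (Un a b)))))) ->
    Der T (Imp th (Neg (UU a b))).

Definition is_theory (T : theory) : Prop := exists a, T a.
Definition consistent (T : theory) : Prop :=
  ~ exists c, Der T c /\ Der T (Neg c).
Definition complete (T : theory) : Prop :=
  consistent T /\ forall c, Der T c \/ Der T (Neg c).

(* Main.v *)
Require Import Defs.
From Stdlib Require Import Classical.

Definition s4 (a b c d : formula) : nat -> formula :=
  fun n => match n with 0 => a | 1 => b | 2 => c | _ => d end.

Lemma th_taut p a b c d : tautology p -> Thm (subst (s4 a b c d) p).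
Proof. intro H. apply T_ax. apply A1. exact H. Qed.

Ltac ptaut := split; [cbv; tauto | let v := fresh "v" in intro v; cbv; destruct (v 0), (v 1), (v 2), (v 3); reflexivity].

Lemma thm_der T a : Thm a -> Der T a.
Proof.
  induction 1 as [| a0 b0 H1 IH1 H2 IH2 | m a Ha IH | | ].
  - apply D_ax; auto.
  - exact (D_R1 T a0 b0 IH1 IH2).
  - apply D_R2; exact Ha.
  - apply D_R3; auto.
  - apply D_R4; auto.
Qed.

Lemma mp a b : Thm a -> Thm (Imp a b) -> Thm b.
Proof. intros; apply T_R1 with a; assumption. Qed.
Lemma dmp T a b : Der T a -> Der T (Imp a b) -> Der T b.
Proof. intros; apply D_R1 with a; assumption. Qed.

Lemma iff_mp a b : Thm (Iff a b) -> Thm a -> Thm b.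
Proof.
  intros H1 H2. eapply mp; [exact H2|]. eapply mp; [exact H1|].
  exact (th_taut (Imp (Iff (Var 0) (Var 1)) (Imp (Var 0) (Var 1))) a b a a ltac:(ptaut)).
Qed.

Lemma iff_trans a b c : Thm (Iff a b) -> Thm (Iff b c) -> Thm (Iff a c).
Proof.
  intros H1 H2. eapply mp; [exact H2|]. eapply mp; [exact H1|].
  exact (th_taut (Imp (Iff (Var 0) (Var 1)) (Imp (Iff (Var 1) (Var 2)) (Iff (Var 0) (Var 2)))) a b c a ltac:(ptaut)).
Qed.

Lemma iff_sym a b : Thm (Iff a b) -> Thm (Iff b a).
Proof.
  intros H1. eapply mp; [exact H1|].
  exact (th_taut (Imp (Iff (Var 0) (Var 1)) (Iff (Var 1) (Var 0))) a b a a ltac:(ptaut)).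
Qed.

Lemma iff_neg a b : Thm (Iff a b) -> Thm (Iff (Neg a) (Neg b)).
Proof.
  intros H1. eapply mp; [exact H1|].
  exact (th_taut (Imp (Iff (Var 0) (Var 1)) (Iff (Neg (Var 0)) (Neg (Var 1)))) a b a a ltac:(ptaut)).
Qed.

Lemma box_cong m a b : Thm (Iff a b) -> Thm (Iff (Box m a) (Box m b)).
Proof.
  intro H. apply iff_mp with (Box m (Iff a b)).
  - apply T_ax. apply (A4 m Iff a b bc_iff).
  - apply T_R2; auto.
Qed.

Lemma boxn_cong m k a b : Thm (Iff a b) -> Thm (Iff (boxn m k a) (boxn m k b)).
Proof. intro H; induction k; simpl; auto using box_cong. Qed.

Lemma boxn_neg m k a : Thm (Iff (boxn m k (Neg a)) (Neg (boxn m k a))).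
Proof.
  induction k; simpl.
  - exact (th_taut (Iff (Var 0) (Var 0)) (Neg a) a a a ltac:(ptaut)).
  - eapply iff_trans. apply box_cong, IHk.
    apply iff_sym. apply T_ax, A3.
Qed.

Lemma R_L m k a b :
  Thm (Iff (boxn m k (Or (Neg a) b)) (Neg (boxn m k (And a (Neg b))))).
Proof.
  unfold Or. eapply iff_trans. apply boxn_neg.
  apply iff_neg, boxn_cong.
  exact (th_taut (Iff (And (Neg (Neg (Var 0))) (Var 1)) (And (Var 0) (Var 1))) a (Neg b) a a ltac:(ptaut)).
Qed.

Lemma or_and X Y Z W : Thm (Iff X (Neg Y)) -> Thm (Iff Z (Neg W)) ->
  Thm (Iff (Or X Z) (Neg (And Y W))).
Proof.
  intros H1 H2. eapply mp; [exact H2|]. eapply mp; [exact H1|].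
  exact (th_taut (Imp (Iff (Var 0) (Neg (Var 1))) (Imp (Iff (Var 2) (Neg (Var 3)))
     (Iff (Or (Var 0) (Var 2)) (Neg (And (Var 1) (Var 3)))))) X Y Z W ltac:(ptaut)).
Qed.

Lemma bigOr_And a b n :
  Thm (Iff (bigOr n (fun k => boxn M1 k (Or (Neg a) b)))
           (Neg (bigAnd n (fun k => boxn M1 k (And a (Neg b)))))).
Proof.
  induction n; simpl.
  - apply (R_L M1 0).
  - apply or_and; auto. apply (R_L M1 (S n)).
Qed.

Theorem mainTheorem7 (T : theory) (phi psi : formula) :
  is_theory T -> complete T -> Der T (Un phi psi) ->
  Der T psi \/
  exists m : nat,
    Der T (And (bigAnd m (fun i => boxn M1 i (And phi (Neg psi))))
               (boxn M1 (S m) psi)).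
Proof.
  intros _ [Hcons Hcomp] Hu.
  destruct (Hcomp psi) as [H|Hnpsi]; [left; auto|right].
  apply NNPP. intro Hn.
  set (t := Imp (Var 0) (Var 0)).
  assert (Ht : Der T t).
  { apply thm_der. exact (th_taut t (Var 0) (Var 1) (Var 2) (Var 3) ltac:(ptaut)). }
  assert (Weak : forall x, Der T x -> Der T (Imp t x)).
  { intros x Hx. eapply dmp; [exact Hx|]. apply thm_der.
    exact (th_taut (Imp (Var 0) (Imp (Var 1) (Var 0))) x t t t ltac:(ptaut)). }
  apply Hcons. exists (Un phi psi). split; [exact Hu|].
  eapply dmp; [exact Ht|]. apply D_R3.
  - apply Weak; auto.
  - intro n. apply Weak.
    destruct (Hcomp (And (bigAnd n (fun i => boxn M1 i (And phi (Neg psi))))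
               (boxn M1 (S n) psi))) as [Hc|Hc].
    + exfalso; apply Hn; exists n; exact Hc.
    + eapply dmp; [exact Hc|].
      eapply dmp; [apply thm_der; apply (boxn_neg M1 (S n) psi)|].
      eapply dmp; [apply thm_der; apply bigOr_And|].
      apply thm_der.
      exact (th_taut (Imp (Iff (Var 0) (Neg (Var 1))) (Imp (Iff (Var 2) (Neg (Var 3)))
        (Imp (Neg (And (Var 1) (Var 3))) (Or (Var 0) (Var 2))))) _ _ _ _ ltac:(ptaut)).
Qed.
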